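(* Let $P$ be the Petersen graph and $\mathcal{N}P$ its normal graph algebra over a field $\mathbb{F}$ of characteristic not $2$. For distinct $i,j\in\{1,\dots,6\}$ let $\mathbf{ij}\in U_P$ denote the vertex $\{i,j\}$ if $i,j\le5$, and $u_i$ if $j=6$ (similarly $u_j$ if $i=6$). For $1\le i\le 6$ let $\mathcal{F}_i=\{\langle\mathbf{ij}\rangle: j\in\{1,\dots,6\},\,j\neq i\}$, a set of five one-dimensional subspaces of $U_P$. If $g$ is an automorphism of $\mathcal{N}P$ such that for each $i$, $g$ maps every member of $\mathcal{F}_i$ to a member of $\mathcal{F}_i$, then $g$ is a scalar automorphism.
   Context: The Petersen graph $P$ has as vertices the 2-element subsets $\{i,j\}$ of $\{1,\dots,5\}$, two vertices adjacent iff disjoint. $\mathcal{N}P=U_P\oplus\mathfrak{Z}_P$ with $U_P$ having basis the vertices and $\mathfrak{Z}_P$ basis the edges, commutative bilinear product determined by: for distinct vertices $x,y$, $xy$ is the edge joining them if adjacent and $0$ otherwise; $x^2$ is the sum of the three edges at $x$; products involving $\mathfrak{Z}_P$ are $0$. For $1\le i\le5$, $u_i=\frac12\left(\sum_{i\notin A}A-\sum_{i\in A}A\right)$, sums over vertices $A$. An automorphism of $\mathcal{N}P$ is a product-preserving linear bijection mapping $U_P$ onto $U_P$ and $\mathfrak{Z}_P$ onto $\mathfrak{Z}_P$; it is scalar if for some $\alpha\neq0$ it is $u\mapsto\alpha u$ on $U_P$ and $\mathfrak{z}\mapsto\alpha^2\mathfrak{z}$ on $\mathfrak{Z}_P$.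 *)

(* Defs.v *)
From HB Require Import structures.
From mathcomp Require Import all_boot all_order all_algebra.
Set Implicit Arguments. Unset Strict Implicit. Unset Printing Implicit Defensive.
Import GRing.Theory.
Local Open Scope ring_scope.

(* Vertices of the Petersen graph: 2-element subsets of {1..5} (here 'I_5 = {0..4}). *)
Notation PV := {A : {set 'I_5} | #|A| == 2%N}.

Definition padj (a b : PV) : bool := [disjoint val a & val b].

Notation PE := {e : {set PV} | [exists a, exists b, padj a b && (e == [set a; b])]}.

Notation UP F := {ffun PV -> F^o}.
Notation ZP F := {ffun PE -> F^o}.
Notation NP F := (UP F * ZP F)%type.

Section Alg.
Variable F : fieldType.
Local Notation UP := (UP F).
Local Notation ZP := (ZP F).
Local Notation NP := (NP F).



Definition basisU (a : PV) : UP := [ffun b => if b == a then 1 else 0].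
Definition basisZ (e : PE) : ZP := [ffun e' => if e' == e then 1 else 0].

(* product of basis vertices: the edge joining a,b if adjacent (the unique edge e
   with val e = {a,b}, written as a sum over that singleton), the sum of the three
   edges at a if a = b, and 0 otherwise *)
Definition bprod (a b : PV) : ZP :=
  if a == b then \sum_(e : PE | a \in val e) basisZ e
  else if padj a b then \sum_(e : PE | val e == [set a; b]) basisZ e
  else 0.

Definition mulU (u w : UP) : ZP :=
  \sum_(a : PV) \sum_(b : PV) (u a * w b) *: bprod a b.

Definition mulNP (x y : NP) : NP := (0, mulU x.1 y.1).

Definition is_autNP (g : NP -> NP) : Prop :=
  [/\ (forall (c : F) (x y : NP), g (c *: x + y) = c *: g x + g y),
      bijective g,
      (forall x y : NP, g (mulNP x y) = mulNP (g x) (g y)),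
      (forall x : NP, (exists u : UP, g (u, 0) = x) <-> (exists u : UP, x = (u, 0)))
    & (forall x : NP, (exists z : ZP, g (0, z) = x) <-> (exists z : ZP, x = (0, z)))].

Definition is_scalar_autNP (g : NP -> NP) : Prop :=
  exists2 alpha : F, alpha != 0 &
    (forall u : UP, g (u, 0) = (alpha *: u, 0)) /\
    (forall z : ZP, g (0, z) = (0, alpha ^+ 2 *: z)).

Definition uvec (i : 'I_5) : UP :=
  (2%:R)^-1 *: (\sum_(A : PV | i \notin val A) basisU A
                - \sum_(A : PV | i \in val A) basisU A).

(* bold ij for distinct i j in {1..6} (here 'I_6 = {0..5}, 5 playing the role of 6):
   the vertex {i,j} if both are < 5, else u_i (if j is the sixth index) or u_j. *)
Definition bold (i j : 'I_6) : UP :=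
  if ((i < 5)%N && (j < 5)%N) then
    [ffun A : PV => if val A == [set (inord i : 'I_5); inord j] then 1 else 0]
  else if (j == 5%N :> nat) then uvec (inord i) else uvec (inord j).

Definition line (v : UP) : UP -> Prop := fun w => exists c : F, w = c *: v.

Definition maps_line_to (g : NP -> NP) (v w : UP) : Prop :=
  forall x : UP, line w x <-> exists y : UP, line v y /\ g (y, 0) = (x, 0).

End Alg.

(* Main.v *)
Require Import Defs.
From HB Require Import structures.
From mathcomp Require Import all_boot all_order all_algebra.
From mathcomp Require Import zify.
Set Implicit Arguments. Unset Strict Implicit. Unset Printing Implicit Defensive.
Import GRing.Theory.
Local Open Scope ring_scope.

Lemma sum_ind (F : fieldType) (T : finType) (P : pred T) (B : T) :
  \sum_(A : T | P A) ((if B == A then 1 else 0) : F) = if P B then 1 else 0.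
Proof.
rewrite big_mkcond (bigD1 B) //= eqxx big1 ?addr0 //.
by move=> A; rewrite eq_sym => /negbTE ->; case: (P A).
Qed.

Lemma uvecE (F : fieldType) p (B : PV) :
  uvec F p B = if p \in val B then - 2%:R^-1 else 2%:R^-1.
Proof.
rewrite /uvec !ffunE !sum_ffunE.
under eq_bigr do rewrite ffunE.
under [X in _ - X]eq_bigr do rewrite ffunE.
rewrite !sum_ind.
by case: (p \in val B) => /=; rewrite /GRing.scale /= ?sub0r ?mulrN1 ?subr0 ?mulr1.
Qed.

Definition indv (F : fieldType) (p q : 'I_5) : UP F :=
  [ffun B : PV => if val B == [set p; q] then 1 else 0].

Lemma card_pq (p q : 'I_5) : p != q -> #|[set p; q]| == 2%N.
Proof. by rewrite cards2 => ->. Qed.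

Definition mkV (p q : 'I_5) (H : p != q) : PV := exist _ [set p; q] (card_pq H).

Definition w6 (p : 'I_5) : 'I_6 := widen_ord (leqnSn 5) p.
Definition m6 : 'I_6 := ord_max.

Lemma inord_w6 p : inord (w6 p) = p.
Proof. by apply: val_inj; rewrite /= inordK // ltnS ltnW. Qed.

Lemma bold_ww F p q : bold F (w6 p) (w6 q) = indv F p q.
Proof. by rewrite /bold /= !ltn_ord /= !inord_w6. Qed.

Lemma bold_wm F p : bold F (w6 p) m6 = uvec F p.
Proof. by rewrite /bold /= ltn_ord /= inord_w6. Qed.

Lemma bold_mw F p : bold F m6 (w6 p) = uvec F p.
Proof. by rewrite /bold /= (ltn_eqF (ltn_ord p)) -[nat_of_ord p]/(nat_of_ord (w6 p)) inord_w6. Qed.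

Lemma I6_case (k : 'I_6) : k = m6 \/ exists k', k = w6 k'.
Proof.
case: (ltnP k 5) => Hk.
  by right; exists (Ordinal Hk); apply: val_inj.
by left; apply: val_inj => /=; apply/eqP; rewrite eqn_leq Hk -ltnS ltn_ord.
Qed.

Lemma scaleE (F : fieldType) (T : finType) (c : F) (f : {ffun T -> F^o}) x :
  (c *: f) x = c * f x.
Proof. by rewrite ffunE. Qed.

Lemma indvE F p q (H : p != q) : indv F p q (@mkV p q H) = 1.
Proof. by rewrite ffunE /= eqxx. Qed.

Definition a0 : 'I_5 := @Ordinal 5 0 isT.
Definition a1 : 'I_5 := @Ordinal 5 1 isT.
Definition a2 : 'I_5 := @Ordinal 5 2 isT.
Definition a3 : 'I_5 := @Ordinal 5 3 isT.

Lemma other_vertex (S : {set 'I_5}) : exists B : PV, val B != S.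
Proof.
case E: (val (@mkV a0 a1 isT) == S).
  exists (@mkV a2 a3 isT); rewrite -(eqP E) /=.
  apply/negP => /eqP E2; have : a2 \in [set a0; a1] by rewrite -E2 set21.
  by rewrite !inE.
by exists (@mkV a0 a1 isT); rewrite E.
Qed.

Lemma third (p q : 'I_5) : exists m : 'I_5, (m != p) && (m != q).
Proof.
have : (0 < #|~: [set p; q]|)%N.
  have E : (#|[set p; q]| + #|~: [set p; q]| = 5)%N by rewrite cardsC; exact: card_ord.
  have E2 := cards2 p q.
  have : (((p != q) : nat) <= 1)%N by case: (p != q).
  lia.
case/card_gt0P => m; rewrite !inE negb_or => Hm; by exists m.
Qed.

Lemma w6_inj : injective w6.
Proof. by move=> x y /(congr1 val) /= /val_inj. Qed.

Lemma half_neq0 (F : fieldType) : (2%:R : F) != 0 -> (2%:R^-1 : F) != 0.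
Proof. by rewrite invr_eq0. Qed.

Lemma evalH (F : fieldType) (u v : UP F) c1 c2 (B : PV) : c1 *: u = c2 *: v -> c1 * u B = c2 * v B.
Proof. by move/(congr1 (fun f : UP F => f B)); rewrite !scaleE. Qed.

Lemma key (F : fieldType) (char2 : (2%:R : F) != 0) p q k l (pq : p != q) (c1 c2 : F) :
  c1 != 0 -> c2 != 0 -> k != w6 p -> l != w6 q ->
  c1 *: bold F (w6 p) k = c2 *: bold F (w6 q) l -> k = w6 q.
Proof.
move=> c10 c20.
have h0 := half_neq0 char2.
case: (I6_case k) => [->|[k' ->]]; case: (I6_case l) => [->|[l' ->]].
- move=> kp lq; rewrite !bold_wm => H; exfalso.
  have := evalH (mkV pq) H; rewrite !uvecE /= !inE !eqxx orbT /= !mulrN => /oppr_inj E.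
  have := mulIf h0 E => E2; subst c2.
  case: (third p q) => m /andP [mp mq].
  have pm : p != m by rewrite eq_sym.
  have := evalH (mkV pm) H; rewrite !uvecE /= !inE eqxx /= eq_sym (negbTE pq) eq_sym (negbTE mq) /=.
  rewrite mulrN => /eqP; rewrite eq_sym -subr_eq0 opprK -mulr2n -(mulr_natr (c1 / 2)) mulf_eq0 => /orP [].
    by rewrite mulf_eq0 (negbTE c10) (negbTE h0).
  by rewrite (negbTE char2).
- move=> kp lq; rewrite bold_wm bold_ww => H; exfalso.
  case: (other_vertex [set q; l']) => B HB.
  have := evalH B H; rewrite uvecE ffunE (negbTE HB) mulr0 => /eqP.
  by case: ifP => _; rewrite ?mulrN ?oppr_eq0 mulf_eq0 (negbTE c10) (negbTE h0).
- move=> kp lq; rewrite bold_wm bold_ww => H; exfalso.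
  case: (other_vertex [set p; k']) => B HB.
  have := evalH B H; rewrite uvecE ffunE (negbTE HB) mulr0 => /eqP.
  by rewrite eq_sym; case: ifP => _; rewrite ?mulrN ?oppr_eq0 mulf_eq0 (negbTE c20) (negbTE h0).
- move=> kp lq; rewrite !bold_ww => H.
  have kp' : k' != p by apply: contraNneq kp => ->.
  have pk : p != k' by rewrite eq_sym.
  have := evalH (mkV pk) H; rewrite !ffunE /= eqxx mulr1.
  case: ifP => [/eqP E _|_ /eqP]; last by rewrite mulr0 (negbTE c10).
  have : p \in [set q; l'] by rewrite -E set21.
  have : k' \in [set q; l'] by rewrite -E set22.
  rewrite !inE (negbTE pq) /= => /orP [/eqP -> //|/eqP Ekl /eqP Epl].
  by rewrite Ekl Epl eqxx in kp'.
Qed.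

Lemma ffun_expand (F : fieldType) (T : finType) (f : {ffun T -> F^o}) :
  f = \sum_x f x *: [ffun y => if y == x then 1 else 0].
Proof.
apply/ffunP => B; rewrite sum_ffunE (bigD1 B) //= big1 ?addr0.
  by rewrite scaleE ffunE eqxx mulr1.
by move=> A /negbTE AB; rewrite scaleE ffunE eq_sym AB mulr0.
Qed.

Lemma pair_sum1 (F : fieldType) (I : finType) (P : pred I) (f : I -> UP F) :
  (\sum_(i | P i) f i, 0) = \sum_(i | P i) ((f i, 0) : NP F).
Proof.
apply: (big_morph (fun z : UP F => (z, 0 : ZP F))) => [x y|] //=.
have -> : ((x, 0) + (y, 0) : NP F) = (x + y, 0 + 0) by []. by rewrite addr0.
Qed.

Lemma pair_sum2 (F : fieldType) (I : finType) (P : pred I) (f : I -> ZP F) :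
  (0, \sum_(i | P i) f i) = \sum_(i | P i) ((0, f i) : NP F).
Proof.
apply: (big_morph (fun z : ZP F => (0 : UP F, z))) => [x y|] //=.
have -> : ((0, x) + (0, y) : NP F) = (0 + 0, x + y) by []. by rewrite addr0.
Qed.

Lemma mulU_basis (F : fieldType) (a b : PV) (c d : F) :
  mulU (c *: basisU F a) (d *: basisU F b) = (c * d) *: bprod F a b.
Proof.
rewrite /mulU (bigD1 a) //= (bigD1 b) //= big1 => [|y yb]; last first.
  by rewrite !scaleE !ffunE (negbTE yb) !mulr0 scale0r.
rewrite big1 => [|x xa]; last first.
  by apply: big1 => y _; rewrite !scaleE !ffunE (negbTE xa) !mulr0 mul0r scale0r.
by rewrite !scaleE !ffunE !eqxx !mulr1 !addr0.
Qed.


Local Notation LIN g := (forall (c : _) (x y : NP _), g (c *: x + y) = c *: g x + g y).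

Lemma g0 (F : fieldType) (g : NP F -> NP F) : LIN g -> g 0 = 0.
Proof.
move=> gl; have E := gl 1 0 0; rewrite addr0 !scale1r in E.
by apply: (@addrI _ (g 0)); rewrite addr0 -E.
Qed.

Lemma gD (F : fieldType) (g : NP F -> NP F) : LIN g -> forall x y, g (x + y) = g x + g y.
Proof. by move=> gl x y; have := gl 1 x y; rewrite !scale1r. Qed.

Lemma gZ (F : fieldType) (g : NP F -> NP F) : LIN g -> forall (c : F) x, g (c *: x) = c *: g x.
Proof. by move=> gl c x; rewrite -[c *: x]addr0 gl (g0 gl) addr0. Qed.

Lemma gsum (F : fieldType) (g : NP F -> NP F) : LIN g ->
  forall (I : finType) (P : pred I) (f : I -> NP F), g (\sum_(i | P i) f i) = \sum_(i | P i) g (f i).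
Proof. by move=> gl I P f; apply: big_morph; [exact: gD | exact: g0]. Qed.


Lemma basisU_indv (F : fieldType) (A : PV) p q : val A = [set p; q] -> basisU F A = indv F p q.
Proof. by move=> E; apply/ffunP => B; rewrite !ffunE -E. Qed.

Lemma indv_sym (F : fieldType) p q : indv F p q = indv F q p.
Proof. by rewrite /indv setUC. Qed.

Lemma basisU_neq0 (F : fieldType) (A : PV) : basisU F A != 0.
Proof.
apply/negP => /eqP /(congr1 (fun f : UP F => f A)); rewrite !ffunE eqxx => /eqP.
by rewrite oner_eq0.
Qed.

Lemma basisZ_neq0 (F : fieldType) (e : PE) : basisZ F e != 0.
Proof.
apply/negP => /eqP /(congr1 (fun f : ZP F => f e)); rewrite !ffunE eqxx => /eqP.
by rewrite oner_eq0.
Qed.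

Lemma padj_irr (a : PV) : ~~ padj a a.
Proof.
rewrite /padj -setI_eq0 setIid; apply/negP => /eqP E.
by have := valP a; rewrite E cards0.
Qed.

Lemma padj_sym (a b : PV) : padj a b = padj b a.
Proof. by rewrite /padj disjoint_sym. Qed.

Lemma edge_dec (e : PE) : exists a c, padj a c /\ val e = [set a; c].
Proof.
by case/existsP: (valP e) => a /existsP [c /andP [H /eqP E]]; exists a, c.
Qed.

Lemma bprod_edge (F : fieldType) (e : PE) a c : padj a c -> val e = [set a; c] ->
  bprod F a c = basisZ F e.
Proof.
move=> H E.
have ac : a != c by apply: contraNneq (padj_irr a) => E2; rewrite {2}E2.
rewrite /bprod (negbTE ac) H (big_pred1 e) //.
by move=> e'; rewrite /= -E.
Qed.

Lemma snd_sum (F : fieldType) (I : finType) (P : pred I) (f : I -> NP F) :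
  (\sum_(i | P i) f i).2 = \sum_(i | P i) (f i).2.
Proof. by apply: big_morph. Qed.

Lemma pscale1 (F : fieldType) (c : F) (x : UP F) : ((c *: x, 0) : NP F) = c *: ((x, 0) : NP F).
Proof. by have -> : c *: ((x, 0) : NP F) = (c *: x, c *: 0) by []; rewrite scaler0. Qed.

Lemma pscale2 (F : fieldType) (c : F) (x : ZP F) : ((0, c *: x) : NP F) = c *: ((0, x) : NP F).
Proof. by have -> : c *: ((0, x) : NP F) = (c *: 0, c *: x) by []; rewrite scaler0. Qed.

Lemma basisU_expand (F : fieldType) (u : UP F) : u = \sum_A u A *: basisU F A.
Proof. exact: ffun_expand. Qed.

Lemma basisZ_expand (F : fieldType) (u : ZP F) : u = \sum_A u A *: basisZ F A.
Proof. exact: ffun_expand. Qed.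

Lemma common_nb (a b : PV) : ~~ padj a b -> exists c : PV, padj a c && padj b c.
Proof.
move=> nab.
have cU : (#|val a :|: val b| <= 3)%N.
  have E := cardsUI (val a) (val b).
  rewrite (eqP (valP a)) (eqP (valP b)) in E.
  have : (0 < #|val a :&: val b|)%N by rewrite card_gt0 setI_eq0.
  lia.
have cC : (2 <= #|~: (val a :|: val b)|)%N.
  have E : (#|val a :|: val b| + #|~: (val a :|: val b)| = 5)%N by rewrite cardsC; exact: card_ord.
  lia.
have : (0 < #|~: (val a :|: val b)|)%N by lia.
case/card_gt0P => x Hx.
have : (0 < #|~: (val a :|: val b) :\ x|)%N.
  have E := cardsD1 x (~: (val a :|: val b)). rewrite Hx in E. lia.
case/card_gt0P => y; rewrite !inE negb_or => /andP [yx /andP [ya yb]].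
move: Hx; rewrite !inE negb_or => /andP [xa xb].
have xy : x != y by rewrite eq_sym.
exists (mkV xy); apply/andP; split; rewrite /padj -setI_eq0 /=; apply/eqP/setP => z;
  rewrite !inE; apply/negP => /andP [zv /orP [/eqP zx|/eqP zy]]; subst z.
- by rewrite zv in xa.
- by rewrite zv in ya.
- by rewrite zv in xb.
- by rewrite zv in yb.
Qed.

Unset Implicit Arguments.

Theorem proposition10p3 (F : fieldType) (char2 : (2%:R : F) != 0)
  (g : NP F -> NP F) (gaut : is_autNP g)
  (gF : forall i j : 'I_6, j != i ->
          exists2 k : 'I_6, k != i & maps_line_to g (bold F i j) (bold F i k)) :
  is_scalar_autNP g.
Proof.
case: gaut => glin gbij gmul gU gZZ.
have ginj := bij_inj gbij.
have gU1 : forall u, g (u, 0) = ((g (u, 0)).1, 0).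
  by move=> u; have [|u' ->] := (gU (g (u, 0))).1; first by exists u.
pose lam := fun A : PV => (g (basisU F A, 0)).1 A.
have gV : forall A, g (basisU F A, 0) = (lam A *: basisU F A, 0).
  move=> A; case/cards2P: (valP A) => p [q [pq EA]].
  have EB := basisU_indv F EA.
  set x := (g (basisU F A, 0)).1.
  have Hx := gU1 (basisU F A); rewrite -/x in Hx.
  have qp : w6 q != w6 p by apply: contraNneq pq => /w6_inj ->.
  have pq' : w6 p != w6 q by rewrite eq_sym.
  case: (gF (w6 p) (w6 q) qp) => k kp Hk.
  case: (gF (w6 q) (w6 p) pq') => l lq Hl.
  have [c1 E1] : line (bold F (w6 p) k) x.
    apply/Hk; exists (basisU F A); split => //; exists 1; by rewrite scale1r bold_ww EB.
  have [c2 E2] : line (bold F (w6 q) l) x.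
    apply/Hl; exists (basisU F A); split => //; exists 1; by rewrite scale1r bold_ww EB indv_sym.
  have xne0 : x != 0.
    apply/negP => /eqP x0.
    have : g (basisU F A, 0) = g 0 by rewrite Hx x0 (g0 glin).
    by move/ginj => /(congr1 fst) /= /eqP; rewrite (negbTE (basisU_neq0 F A)).
  have c10 : c1 != 0 by apply: contraNneq xne0 => c0; rewrite E1 c0 scale0r.
  have c20 : c2 != 0 by apply: contraNneq xne0 => c0; rewrite E2 c0 scale0r.
  have Ek := key char2 pq c10 c20 kp lq (etrans (esym E1) E2).
  rewrite Hx; congr (_, _).
  rewrite /lam -/x E1 Ek bold_ww -EB scaleE ffunE eqxx mulr1 //.
have lam0 : forall A, lam A != 0.
  move=> A; apply/negP => /eqP l0.
  have : g (basisU F A, 0) = g 0 by rewrite gV l0 scale0r (g0 glin).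
  by move/ginj => /(congr1 fst) /= /eqP; rewrite (negbTE (basisU_neq0 F A)).
have gprod : forall a b, g (0, bprod F a b) = (0, (lam a * lam b) *: bprod F a b).
  move=> a b; have := gmul (basisU F a, 0) (basisU F b, 0).
  rewrite !gV /mulNP /= mulU_basis.
  by have := mulU_basis (F:=F) a b 1 1; rewrite !scale1r mulr1 scale1r => ->.
have gE : forall e a c, padj a c -> val e = [set a; c] ->
    g (0, basisZ F e) = (0, (lam a * lam c) *: basisZ F e).
  by move=> e a c H E; rewrite -(bprod_edge F H E) gprod.
have Zdiag : forall e e', e' != e -> (g (0, basisZ F e)).2 e' = 0.
  move=> e e' ne; case: (edge_dec e) => a [c [H E]].
  by rewrite (gE e a c H E) /= scaleE ffunE (negbTE ne) mulr0.
have adj : forall a b, padj a b -> lam a = lam b.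
  move=> a b H.
  have Pe : [exists a', exists b', padj a' b' && ([set a; b] == [set a'; b'])].
    by apply/existsP; exists a; apply/existsP; exists b; rewrite H eqxx.
  pose e0 : PE := Sub [set a; b] Pe.
  have ae0 : a \in val e0 by rewrite /= set21.
  have := congr1 (fun z : NP F => z.2 e0) (gprod a a).
  rewrite {1}/bprod eqxx pair_sum2 (gsum glin) snd_sum sum_ffunE (bigD1 e0) //= big1; last first.
    by move=> e /andP [_ ne]; apply: Zdiag; rewrite eq_sym.
  rewrite (gE e0 a b H erefl) /= scaleE ffunE eqxx mulr1 addr0.
  rewrite /bprod eqxx scaleE sum_ffunE.
  under eq_bigr do rewrite ffunE.
  rewrite sum_ind ae0 mulr1 => /(mulfI (lam0 a)) //.
have lamc : forall a b, lam a = lam b.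
  move=> a b; case H: (padj a b); first exact: adj.
  case: (common_nb (negbT H)) => c /andP [ac bc].
  by rewrite (adj a c ac) (adj b c bc).
pose v0 := mkV (isT : a0 != a1).
exists (lam v0); first exact: lam0.
split.
  move=> u; rewrite {1}(basisU_expand u) pair_sum1 (gsum glin).
  under eq_bigr do rewrite pscale1 (gZ glin) gV -pscale1 scalerA (lamc _ v0) mulrC -scalerA.
  by rewrite -pair_sum1 -scaler_sumr -basisU_expand.
move=> z; rewrite {1}(basisZ_expand z) pair_sum2 (gsum glin).
under eq_bigr => e _.
  case: (edge_dec e) => a [c [H E]].
  rewrite pscale2 (gZ glin) (gE e a c H E) -pscale2 scalerA (lamc a v0) (lamc c v0) -expr2 mulrC -scalerA.
  over.
by rewrite -pair_sum2 -scaler_sumr -basisZ_expand.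
Qed.
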